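(* Let $K\subset\mathbb{R}^d$ be a non-empty compact set, let $\rho\in(0,1)$, let $\mathcal{B}$ be an inner regular partition of $K$ with ratio $\rho$, and let $\mathcal{T}$ be the corresponding tree. Then $\dim_{\mathrm{L}}\partial\mathcal{T}\leq\dim_{\mathrm{L}} K$.
   Context: $B(x,r)$ is the closed ball; $N_r(F)$ is the minimal number of closed $r$-balls centred in $F$ covering $F$; $\dim_{\mathrm{L}} K=\sup\{s>0:\exists C>0\ \forall 0<r\leq R<1\ \forall x\in K,\ N_r(B(x,R)\cap K)\geq C(R/r)^s\}$. Inner regular partition: for $\rho\in(0,1)$, a family $\mathcal{B}=\{(Q_{i,k},x_{i,k}):k\in\mathbb{N}\cup\{0\},\ i\in\mathcal{N}_k\}$ of non-empty Borel sets $Q_{i,k}$ with distinguished points $x_{i,k}\in K\cap Q_{i,k}$ such that, for some constants $c,C>0$: (i) $\#\mathcal{N}_0=1$; (ii) for each $k$, $K$ is the disjoint union of $Q_{i,k}$, $i\in\mathcal{N}_k$; (iii) if $k\leq m$, $i\in\mathcal{N}_k$, $j\in\mathcal{N}_m$ then either $Q_{i,k}\cap Q_{j,m}=\varnothing$ or $Q_{j,m}\subset Q_{i,k}$; (iv) $B(x_{i,k},c\rho^k)\subset Q_{i,k}\subset B(x_{i,k},C\rho^k)$ for all $k,i$; (v) $\{x_{i,k}:i\in\mathcal{N}_k\}\subset\{x_{i,k+1}:i\in\mathcal{N}_{k+1}\}$. The number of children (sets of level $k+1$ contained in a given set of level $k$) is bounded by some $M\in\mathbb{N}$. Corresponding tree: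 with alphabet $\mathcal{A}=\{1,\ldots,M\}$, label the root set of level $0$ by the empty word, and inductively, if the set with label $\mathtt{a}\in\mathcal{A}^k$ has children $R_1,\ldots,R_j$ ($j\leq M$), label $R_i$ by $\mathtt{a}i$. $\mathcal{T}$ is the set of all labels, $\mathcal{T}_n$ the labels of length $n$. For a word $\mathtt{a}$ of length $n$, $[\mathtt{a}]$ is the set of infinite sequences in $\mathcal{A}^{\mathbb{N}}$ beginning with $\mathtt{a}$, and $\partial\mathcal{T}=\bigcap_n\bigcup_{\mathtt{a}\in\mathcal{T}_n}[\mathtt{a}]$. The lower dimension of $\partial\mathcal{T}$ is defined as $\dim_{\mathrm{L}}\partial\mathcal{T}=\sup\{s>0:\exists C>0\ \forall 0\leq m\leq k\ \forall\mathtt{a}\in\mathcal{T}_m,\ \#\{\mathtt{b}\in\mathcal{T}_k:[\mathtt{b}]\subset[\mathtt{a}]\}\geq C\rho^{(m-k)s}\}$. *)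

(* Defs.v *)
From HB Require Import structures.
From mathcomp Require Import all_boot all_order all_algebra.
From mathcomp Require Import finmap.
From mathcomp Require Import all_classical all_reals all_analysis.
Set Implicit Arguments. Unset Strict Implicit. Unset Printing Implicit Defensive.
Import Order.TTheory GRing.Theory Num.Theory.
Import numFieldNormedType.Exports.
Local Open Scope classical_set_scope.
Local Open Scope ring_scope.

Definition edist (R : realType) (d : nat) (x y : 'rV[R]_d) : R :=
  Num.sqrt (\sum_(i < d) (x ord0 i - y ord0 i) ^+ 2).

Definition cball (R : realType) (d : nat) (x : 'rV[R]_d) (r : R) : set 'rV[R]_d :=
  [set y | edist x y <= r].

Definition cover_counts (R : realType) (d : nat) (F : set 'rV[R]_d) (r : R) : set nat :=
  [set n | exists s : seq 'rV[R]_d, size s = n /\ (forall c, c \in s -> F c) /\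
      F `<=` [set y | exists2 c, c \in s & cball c r y]].

(* N_r(F): minimal number of closed r-balls centred in F covering F (+oo if none) *)
Definition Ncov (R : realType) (d : nat) (F : set 'rV[R]_d) (r : R) : \bar R :=
  ereal_inf [set ((n%:R : R)%:E) | n in cover_counts F r].

(* lower dimension of K (sup of the empty set is -oo) *)
Definition lower_dim (R : realType) (d : nat) (K : set 'rV[R]_d) : \bar R :=
  ereal_sup [set s%:E | s in [set s : R | 0 < s /\ exists C : R, 0 < C /\
     forall r Rr : R, 0 < r -> r <= Rr -> Rr < 1 -> forall x, K x ->
       ((C * (Rr / r) `^ s)%:E <= Ncov (cball x Rr `&` K) r)%E]].

Definition borel_set (R : realType) (d : nat) (A : set 'rV[R]_d) : Prop :=
  <<s open >> A.

(* inner regular partition of K with ratio rho: index sets N k (subsets of an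
   index type I), sets Q k i, distinguished points x k i *)
Definition inner_regular_partition (R : realType) (d : nat) (K : set 'rV[R]_d)
  (rho : R) (I : Type) (N : nat -> set I) (Q : nat -> I -> set 'rV[R]_d)
  (x : nat -> I -> 'rV[R]_d) : Prop :=
  exists c C : R, 0 < c /\ 0 < C /\
  (forall k i, N k i -> Q k i !=set0 /\ borel_set (Q k i) /\ K (x k i) /\ Q k i (x k i)) /\
  (exists i0, N 0%N = [set i0]) /\
  (forall k, K = \bigcup_(i in N k) Q k i /\
               forall i j, N k i -> N k j -> i <> j -> Q k i `&` Q k j = set0) /\
  (forall k m i j, (k <= m)%N -> N k i -> N m j ->
               Q k i `&` Q m j = set0 \/ Q m j `<=` Q k i) /\
  (* (iv) balls are balls of the metric space K *)
  (forall k i, N k i -> cball (x k i) (c * rho ^+ k) `&` K `<=` Q k i /\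
                         Q k i `<=` cball (x k i) (C * rho ^+ k) `&` K) /\
  (forall k i, N k i -> exists j, N k.+1 j /\ x k.+1 j = x k i).

(* A labelling of the partition by words over the alphabet 'I_M (letter a
   stands for a+1 in {1,...,M}) following the construction of the
   corresponding tree. *)
Definition tree_labeling (R : realType) (d : nat) (I : Type) (M : nat)
  (N : nat -> set I) (Q : nat -> I -> set 'rV[R]_d) (lab : nat -> I -> seq 'I_M) : Prop :=
  (forall i, N 0%N i -> lab 0%N i = [::]) /\
  (forall k i j, N k i -> N k.+1 j -> Q k.+1 j `<=` Q k i ->
     exists a, lab k.+1 j = rcons (lab k i) a) /\
  (forall k i j, N k i -> N k j -> lab k i = lab k j -> i = j) /\
  (forall k i (a : 'I_M), N k i ->
     (exists j, N k.+1 j /\ lab k.+1 j = rcons (lab k i) a) ->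
     forall b : 'I_M, (b <= a)%N ->
       exists j, N k.+1 j /\ lab k.+1 j = rcons (lab k i) b).

Definition tree_level (I : Type) (M : nat) (N : nat -> set I)
  (lab : nat -> I -> seq 'I_M) (n : nat) : set (seq 'I_M) := lab n @` N n.

Definition cyl (M : nat) (a : seq 'I_M) : set (nat -> 'I_M) :=
  [set w | [seq w i | i <- iota 0 (size a)] = a].

Definition tree_boundary (M : nat) (T : nat -> set (seq 'I_M)) : set (nat -> 'I_M) :=
  \bigcap_(n in [set: nat]) \bigcup_(a in T n) cyl a.

Definition descendants (M : nat) (T : nat -> set (seq 'I_M)) (k : nat) (a : seq 'I_M)
  : set (seq 'I_M) := [set b | T k b /\ cyl b `<=` cyl a].

Definition tree_lower_dim (R : realType) (M : nat) (rho : R)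
  (T : nat -> set (seq 'I_M)) : \bar R :=
  ereal_sup [set s%:E | s in [set s : R | 0 < s /\ exists C : R, 0 < C /\
     forall m k : nat, (m <= k)%N -> forall a, T m a ->
       C * rho `^ ((m%:R - k%:R) * s) <=
       (#|` fset_set (descendants T k a)|%fset)%:R]].

(* Main.v *)
Require Import Defs.
From HB Require Import structures.
From mathcomp Require Import all_boot all_order all_algebra finmap.
From mathcomp Require Import all_classical all_reals all_analysis.
From mathcomp Require Import ring lra.
Import Order.TTheory GRing.Theory Num.Theory.
Import numFieldNormedType.Exports.
Set Implicit Arguments. Unset Strict Implicit.
Local Open Scope classical_set_scope.
Local Open Scope ring_scope.

Lemma bernoulli_ge (R : realType) (h : R) (n : nat) : 0 <= h ->
  1 + n%:R * h <= (1 + h) ^+ n.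
Proof.
move=> h0; elim: n => [|n IH]; first by rewrite mul0r addr0 expr0.
rewrite exprS -natr1 mulrDl mul1r.
have Hp : 0 <= (1 + h) ^+ n by apply: exprn_ge0; lra.
have : (1 + h) * (1 + n%:R * h) <= (1 + h) * (1 + h) ^+ n.
  by apply: ler_wpM2l => //; lra.
have : 0 <= n%:R * h * h by apply: mulr_ge0 => //; apply: mulr_ge0.
nra.
Qed.

Lemma exists_pow_le (R : realType) (rho t : R) : 0 < rho < 1 -> 0 < t ->
  exists n, rho ^+ n <= t.
Proof.
move=> /andP[r0 r1] t0.
set h := rho^-1 - 1.
have h0 : 0 < h by rewrite /h subr_gt0 invf_gt1.
have th0 : 0 < t * h by apply: mulr_gt0.
have [n tn] : exists n : nat, (t * h)^-1 < n%:R.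
  exists (Num.bound ((t*h)^-1)); apply: archi_boundP; apply: ltW; rewrite invr_gt0.
  done.
exists n.
have Hb := @bernoulli_ge R h n (ltW h0).
have E : 1 + h = rho^-1 by rewrite /h addrC subrK.
rewrite E exprVn in Hb.
have rn : 0 < rho ^+ n by apply: exprn_gt0.
have tn' : t^-1 < n%:R * h.
  have -> : t^-1 = (t * h)^-1 * h by rewrite invfM -mulrA mulVf ?mulr1 // gt_eqF.
  by rewrite ltr_pM2r.
have H3 : t^-1 < (rho ^+ n)^-1 by lra.
by apply: ltW; rewrite ltf_pV2 ?posrE // in H3.
Qed.

Lemma exists_pow_min (R : realType) (rho t : R) : 0 < rho < 1 -> 0 < t ->
  exists n, rho ^+ n <= t /\ (n = 0%N \/ t < rho ^+ n.-1).
Proof.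
move=> hr t0.
have ex : exists n, rho ^+ n <= t by apply: exists_pow_le.
case: (ex_minnP (ex : exists n, (fun n => rho ^+ n <= t) n)) => n Hn Hmin.
exists n; split => //.
case: n Hn Hmin => [|n] Hn Hmin; first by left.
right; rewrite /= ltNge; apply/negP => /Hmin; rewrite ltnn //.
Qed.
Lemma edist_ge0 (R : realType) d (x y : 'rV[R]_d) : 0 <= Defs.edist x y.
Proof. exact: sqrtr_ge0. Qed.

Lemma edist_xx (R : realType) d (x : 'rV[R]_d) : Defs.edist x x = 0.
Proof. by rewrite /Defs.edist big1 ?sqrtr0 // => i _; rewrite subrr expr0n. Qed.

Lemma edist_sq (R : realType) d (x y : 'rV[R]_d) :
  Defs.edist x y ^+ 2 = \sum_(i < d) (x ord0 i - y ord0 i) ^+ 2.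
Proof. by rewrite /Defs.edist sqr_sqrtr // sumr_ge0 // => i _; apply: sqr_ge0. Qed.

Lemma edist_tri2 (R : realType) d (c x y : 'rV[R]_d) (a : R) :
  Defs.edist c x <= a -> Defs.edist c y <= a -> Defs.edist x y <= 2 * a.
Proof.
move=> hx hy.
have a0 : 0 <= a by apply: le_trans hx; apply: edist_ge0.
have Hx : Defs.edist c x ^+ 2 <= a ^+ 2 by rewrite ler_sqr // ?nnegrE ?edist_ge0.
have Hy : Defs.edist c y ^+ 2 <= a ^+ 2 by rewrite ler_sqr // ?nnegrE ?edist_ge0.
rewrite -ler_sqr ?nnegrE ?edist_ge0 //; last by apply: mulr_ge0.
rewrite !edist_sq in Hx Hy *.
apply: (le_trans (y := 2 * \sum_(i < d) (c ord0 i - x ord0 i) ^+ 2 +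
                       2 * \sum_(i < d) (c ord0 i - y ord0 i) ^+ 2)).
  rewrite !mulr_sumr -big_split /=; apply: ler_sum => i _.
  set u := x ord0 i; set v := y ord0 i; set w := c ord0 i.
  have : 0 <= (2 * w - u - v) ^+ 2 by apply: sqr_ge0.
  nra.
nra.
Qed.
Local Close Scope ring_scope.
Lemma count_inj (A B : eqType) (P : A -> B -> Prop) (l : seq A) (cov : seq B) :
  uniq l -> (forall b, b \in l -> exists2 c, c \in cov & P b c) ->
  (forall b b' c, b \in l -> b' \in l -> P b c -> P b' c -> b = b') ->
  (size l <= size cov)%N.
Proof.
elim: l cov => [//|b l IH] cov /= /andP[bl ul] Hc Hi.
have [c cc Pc] := Hc b (mem_head _ _).
have Hs : (0 < size cov)%N by case: (cov) cc.
have -> : size cov = (size (rem c cov)).+1 by rewrite size_rem // prednK.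
rewrite ltnS; apply: IH => //.
  move=> b' b'l; have b'l2 : b' \in b :: l by rewrite inE b'l orbT.
  have [c' c'c Pc'] := Hc b' b'l2.
  exists c' => //.
  have c'c0 : c' != c.
    apply/eqP => E; subst c'.
    have Eb : b' = b by apply: Hi b'l2 (mem_head _ _) Pc' Pc.
    by subst b'; rewrite b'l in bl.
  exact: rem_mem.
by move=> b1 b2 c1 h1 h2; apply: Hi; rewrite inE ?h1 ?h2 orbT.
Qed.

Lemma mem_fset_set_in (T : choiceType) (D : set T) y :
  y \in fset_set D -> D y.
Proof.
case: (pselect (finite_set D)) => fD; first by rewrite in_fset_set // inE.
have -> : fset_set D = fset0 by rewrite /fset_set; case: pselect.
by rewrite inE.
Qed.
Lemma parent_ex (T I : Type) (K : set T) (N : nat -> set I) (Q : nat -> I -> set T) :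
  (forall k i, N k i -> Q k i !=set0) ->
  (forall k, K = \bigcup_(i in N k) Q k i) ->
  (forall k m i j, (k <= m)%N -> N k i -> N m j ->
               Q k i `&` Q m j = set0 \/ Q m j `<=` Q k i) ->
  forall k j, N k.+1 j -> exists i, N k i /\ Q k.+1 j `<=` Q k i.
Proof.
move=> Hne HU Hn k j Nj.
have [y Qy] := Hne _ _ Nj.
have Ky : K y by rewrite (HU k.+1); exists j.
move: Ky; rewrite (HU k) => -[i Ni Qiy].
exists i; split => //.
case: (Hn k k.+1 i j (leqnSn k) Ni Nj) => // H.
by have : (Q k i `&` Q k.+1 j) y by []; rewrite H.
Qed.

Lemma lab_size (T I : Type) (K : set T) (N : nat -> set I) (Q : nat -> I -> set T)
  M (lab : nat -> I -> seq 'I_M) :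
  (forall k i, N k i -> Q k i !=set0) ->
  (forall k, K = \bigcup_(i in N k) Q k i) ->
  (forall k m i j, (k <= m)%N -> N k i -> N m j ->
               Q k i `&` Q m j = set0 \/ Q m j `<=` Q k i) ->
  (forall i, N 0%N i -> lab 0%N i = [::]) ->
  (forall k i j, N k i -> N k.+1 j -> Q k.+1 j `<=` Q k i ->
     exists a, lab k.+1 j = rcons (lab k i) a) ->
  forall k j, N k j -> size (lab k j) = k.
Proof.
move=> Hne HU Hn H0 Hc; elim => [|k IH] j Nj; first by rewrite H0.
have [i [Ni Sub]] := parent_ex Hne HU Hn Nj.
have [a ->] := Hc _ _ _ Ni Nj Sub.
by rewrite size_rcons IH.
Qed.

Lemma ancestor (T I : Type) (K : set T) (N : nat -> set I) (Q : nat -> I -> set T)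
  M (lab : nat -> I -> seq 'I_M) :
  (forall k i, N k i -> Q k i !=set0) ->
  (forall k, K = \bigcup_(i in N k) Q k i) ->
  (forall k m i j, (k <= m)%N -> N k i -> N m j ->
               Q k i `&` Q m j = set0 \/ Q m j `<=` Q k i) ->
  (forall i, N 0%N i -> lab 0%N i = [::]) ->
  (forall k i j, N k i -> N k.+1 j -> Q k.+1 j `<=` Q k i ->
     exists a, lab k.+1 j = rcons (lab k i) a) ->
  forall k j, N k j -> forall l, (l <= k)%N ->
    exists i, N l i /\ Q k j `<=` Q l i /\ lab l i = take l (lab k j).
Proof.
move=> Hne HU Hn H0 Hc; elim => [|k IH] j Nj l.
  rewrite leqn0 => /eqP ->; exists j; split => //; split => //.
  by rewrite H0.
rewrite leq_eqVlt => /orP[/eqP El|].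
  subst l; exists j; split => //; split => //.
  by rewrite take_oversize // (lab_size Hne HU Hn H0 Hc Nj).
rewrite ltnS => lk.
have [p [Np Sub]] := parent_ex Hne HU Hn Nj.
have [a Ea] := Hc _ _ _ Np Nj Sub.
have [i [Ni [Sub2 Ei]]] := IH p Np l lk.
exists i; split => //; split; first by apply: subset_trans Sub Sub2.
rewrite Ea -cats1 takel_cat //.
by rewrite (lab_size Hne HU Hn H0 Hc Np).
Qed.

Lemma cyl_prefix M (a b : seq 'I_M) (a0 : 'I_M) :
  (size a <= size b)%N -> cyl b `<=` cyl a -> a = take (size a) b.
Proof.
move=> sab Hs.
have wb : cyl b (fun i => nth a0 b i) by rewrite /cyl /= -/(mkseq _ _) mkseq_nth.
have := Hs _ wb; rewrite /cyl /= => <-.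
apply: (@eq_from_nth _ a0).
  by rewrite size_map size_iota size_take_min (minn_idPl sab).
move=> i; rewrite size_map size_iota => ia.
by rewrite (nth_map 0%N) ?size_iota // nth_iota // add0n nth_take.
Qed.
Local Open Scope ring_scope.

Theorem lemma3p5 (R : realType) (d : nat) (K : set 'rV[R]_d) (rho : R)
  (I : Type) (N : nat -> set I) (Q : nat -> I -> set 'rV[R]_d)
  (x : nat -> I -> 'rV[R]_d) (M : nat) (lab : nat -> I -> seq 'I_M) :
  K !=set0 -> compact K -> 0 < rho < 1 ->
  inner_regular_partition K rho N Q x ->
  tree_labeling N Q lab ->
  (tree_lower_dim rho (tree_level N lab) <= lower_dim K)%E.
Proof.
move=> [z0 Kz0] _ /andP[r0 r1]
  [c [C [c0 [C0 [Hpt [[i0 HN0] [HUD [Hn [Hball Hv]]]]]]]]] [L0 [Lc [Linj Lch]]].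
have HU : forall k, K = \bigcup_(i in N k) Q k i by move=> k; case: (HUD k).
have Hdis : forall k i j, N k i -> N k j -> i <> j -> Q k i `&` Q k j = set0.
  by move=> k; case: (HUD k).
have Hne : forall k i, N k i -> Q k i !=set0 by move=> k i /Hpt [].
have [a0 _] : exists a0 : 'I_M, True.
  have Ni0 : N 0%N i0 by rewrite HN0.
  have [j [Nj _]] := Hv _ _ Ni0.
  have [i [Ni Sub]] := parent_ex Hne HU Hn Nj.
  by have [a _] := Lc _ _ _ Ni Nj Sub; exists a.
rewrite /tree_lower_dim; apply: ge_ereal_sup => _ [s [s0 [C1 [C10 HT]]] <-].
set alpha := Num.min 1 (rho / (2 * C)).
set gam := alpha * c * rho / 2.
have al0 : 0 < alpha by rewrite lt_min ltr01 /= divr_gt0 // mulr_gt0.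
have al1 : alpha <= 1 by rewrite ge_min lexx.
have al2 : alpha <= rho / (2 * C) by rewrite ge_min lexx orbT.
have gam0 : 0 < gam by rewrite /gam !(mulr_gt0, divr_gt0).
apply: ereal_sup_ubound; exists s => //; split => //.
exists (Num.min C1 1 * gam `^ s); split.
  by rewrite mulr_gt0 // ?lt_min ?C10 ?ltr01 // powR_gt0.
move=> r Rr r0' rR R1 y Ky.
apply: le_ereal_inf_tmp => _ [n [cov [Hsz [Hcin Hcov]]] <-].
rewrite lee_fin; subst n.
have Rr0 : 0 < Rr by lra.
have [m [Hm1 Hm2]] := @exists_pow_min R rho (Rr / (2 * C)) (introT andP (conj r0 r1)) (divr_gt0 Rr0 (mulr_gt0 (ltr0Sn _ 1) C0)).
have Hma : alpha * Rr <= rho ^+ m.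
  case: m Hm1 Hm2 => [|m'] Hm1 Hm2.
    rewrite expr0; nra.
  case: Hm2 => // Hlt; rewrite /= in Hlt.
  have H1 : alpha * Rr <= rho / (2 * C) * Rr by rewrite ler_wpM2r // ltW.
  have E : rho / (2 * C) * Rr = rho * (Rr / (2 * C)) by rewrite mulrAC -mulrA.
  rewrite exprS; nra.
have [i Ni Qiy] : exists2 i, N m i & Q m i y by move: Ky; rewrite (HU m) => -[i Ni Qi]; exists i.
have Hsub : Q m i `<=` cball y Rr `&` K.
  move=> w Qw; have [_ H2] := Hball m i Ni.
  have [Bw Kw] := H2 _ Qw; have [By _] := H2 _ Qiy.
  split => //; rewrite /cball /=; apply: le_trans (edist_tri2 By Bw) _.
  have := ler_wpM2l (ltW C0) Hm1.
  have -> : C * (Rr / (2 * C)) = Rr / 2 by field; rewrite gt_eqF.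
  lra.
have Cp0 : 0 < Num.min C1 1 by rewrite lt_min C10 ltr01.
have Cp1 : Num.min C1 1 <= 1 by rewrite ge_min lexx orbT.
have CpC : Num.min C1 1 <= C1 by rewrite ge_min lexx.
have rat0 : 0 < Rr / r by apply: divr_gt0.
have gr0 : 0 < gam * (Rr / r) by apply: mulr_gt0.
have key : forall B, gam * (Rr / r) <= B ->
    Num.min C1 1 * gam `^ s * (Rr / r) `^ s <= Num.min C1 1 * B `^ s.
  move=> B HB; rewrite -mulrA -(powRM _ (ltW gam0) (ltW rat0)); apply: ler_wpM2l; first exact: ltW.
  by apply: ge0_ler_powR => //; rewrite ?nnegrE ltW //; apply: lt_le_trans HB.
have Egam : gam * (Rr / r) = alpha * Rr * (c * rho / (2 * r)).
  by rewrite /gam; field; rewrite gt_eqF.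
have [n2 [Hn1 Hn2]] := @exists_pow_min R rho (2 * r / c) (introT andP (conj r0 r1))
   (divr_gt0 (mulr_gt0 (ltr0Sn _ 1) r0') c0).
case: (ltnP m n2) => [mn|nm]; last first.
  have Hle : rho ^+ m <= rho ^+ n2 := ler_wiXn2l (ltW r0) (ltW r1) nm.
  have H1 : gam * (Rr / r) <= 1.
    rewrite Egam.
    have Hu : alpha * Rr <= 2 * r / c by lra.
    have Hu2 : alpha * Rr * c <= 2 * r by rewrite -ler_pdivlMr.
    have -> : alpha * Rr * (c * rho / (2 * r)) = (alpha * Rr * c) * rho / (2 * r).
      by rewrite !mulrA.
    rewrite ler_pdivrMr ?mul1r; last by apply: mulr_gt0.
    have : 0 <= alpha * Rr * c by apply: mulr_ge0; [apply: mulr_ge0; apply: ltW|apply: ltW].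
    nra.
  apply: le_trans (key _ H1) _.
  rewrite powR1 mulr1.
  apply: le_trans Cp1 _.
  rewrite ler1n.
  have : (cball y Rr `&` K) y by split => //; rewrite /cball /= edist_xx; apply: ltW.
  move=> /Hcov [c' c'in _].
  by case: (cov) c'in.
set k := n2.-1.
have En2 : n2 = k.+1 by rewrite /k prednK // (leq_ltn_trans (leq0n m) mn).
have Hk1 : 2 * r / c < rho ^+ k.
  case: Hn2 => [E|//]; by rewrite E in mn.
have Hk2 : rho * rho ^+ k <= 2 * r / c by rewrite -exprS -En2.
have mk : (m <= k)%N by rewrite -ltnS -En2.
have rk0 : 0 < rho ^+ k by apply: exprn_gt0.
pose a := lab m i.
have Ta : tree_level N lab m a by exists i.
have HTa := HT m k mk a Ta.
have Hcnt : (#|` fset_set (descendants (tree_level N lab) k a)| <= size cov)%N.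
  apply: (@count_inj _ _ (fun b c' => exists j, N k j /\ lab k j = b /\ cball c' r (x k j))).
  - exact: fset_uniq.
  - move=> b /mem_fset_set_in [[j Nj Ej] Hcyl].
    have [i' [Ni' [Sub' Ei']]] := ancestor Hne HU Hn L0 Lc Nj mk.
    have Hsa : size a = m by apply: (lab_size Hne HU Hn L0 Lc Ni).
    have Hsb : size b = k by rewrite -Ej; apply: (lab_size Hne HU Hn L0 Lc Nj).
    have Hab : (size a <= size b)%N by rewrite Hsa Hsb.
    have Epre := cyl_prefix a0 Hab Hcyl.
    have ii : i' = i by apply: (Linj m i' i Ni' Ni); rewrite Ei' Ej -{1}Hsa -Epre.
    subst i'.
    have Qx : Q k j (x k j) by have [_ [_ [_ H]]] := Hpt k j Nj.
    have := Hsub _ (Sub' _ Qx) => /Hcov [c' c'in Bc'].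
    by exists c' => //; exists j.
  - move=> b b' c' _ _ [j [Nj [Ej Bj]]] [j' [Nj' [Ej' Bj']]].
    rewrite -Ej -Ej'; case: (pselect (j = j')) => [->//|jj].
    have Hd := edist_tri2 Bj Bj'.
    have Kj' : K (x k j') by have [_ [_ [H _]]] := Hpt k j' Nj'.
    have Qj' : Q k j' (x k j') by have [_ [_ [_ H]]] := Hpt k j' Nj'.
    have Hin : (cball (x k j) (c * rho ^+ k) `&` K) (x k j').
      split => //; rewrite /cball /=; apply: le_trans Hd _.
      have : 2 * r < c * rho ^+ k by rewrite -ltr_pdivrMl // mulrC.
      lra.
    have := (Hball k j Nj).1 _ Hin => Qj.
    have : (Q k j `&` Q k j') (x k j') by [].
    by rewrite (Hdis k j j' Nj Nj' jj).
have Hpow : rho `^ ((m%:R - k%:R) * s) = (rho ^+ m / rho ^+ k) `^ s.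
  rewrite powRrM powRB; last by rewrite (gt_eqF r0) implybT.
  by congr (powR _ _); congr (_ * (_)^-1); apply: powR_mulrn; apply: ltW.
have HB : gam * (Rr / r) <= rho ^+ m / rho ^+ k.
  rewrite ler_pdivlMr // Egam.
  have Hc2 : c * (rho * rho ^+ k) <= 2 * r by move: Hk2; rewrite ler_pdivlMr // mulrC.
  have Hu : c * rho / (2 * r) * rho ^+ k <= 1.
    have -> : c * rho / (2 * r) * rho ^+ k = c * (rho * rho ^+ k) / (2 * r) by rewrite !mulrA mulrAC.
    by rewrite ler_pdivrMr ?mul1r // mulr_gt0.
  have : 0 <= alpha * Rr by apply: mulr_ge0; apply: ltW.
  nra.
apply: le_trans (key _ HB) _.
apply: (le_trans (y := C1 * (rho ^+ m / rho ^+ k) `^ s)).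
  by apply: ler_wpM2r => //; apply: powR_ge0.
rewrite -Hpow; apply: le_trans HTa _; rewrite ler_nat; exact: Hcnt.
Qed.
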